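(* Let $\Phi(\omega)=\frac{\alpha\omega+\beta}{\gamma\omega+\delta}$ with $\alpha,\beta,\gamma,\delta\in\mathbb{R}$, $\alpha\delta-\beta\gamma=1$, and let $R$ be a real rational function such that $\Phi\circ R$ is a rational function (i.e. $R$ is not the constant $-\delta/\gamma$). Then $$\operatorname{Ind}_{\mathbb{P}\mathbb{R}}(\Phi\circ R)=\operatorname{Ind}_{\mathbb{P}\mathbb{R}}(R).$$
   Context: For a real rational function $R$ and a real pole $\omega_0$ of $R$ of odd order, $\operatorname{Ind}_{\omega_0}(R)=+1$ if $R(\omega_0-0)<0<R(\omega_0+0)$ and $-1$ if $R(\omega_0-0)>0>R(\omega_0+0)$; $\operatorname{Ind}_{-\infty}^{+\infty}(R)$ is the sum of these over all real poles of $R$ of odd order. Writing $R=f_1/f_0$, $R$ has a pole at $\infty$ of order $\deg f_1-\deg f_0$ when this is positive; if this order is odd, $\operatorname{Ind}_\infty(R)=+1$ if $R(+\infty)<0<R(-\infty)$ and $-1$ if $R(+\infty)>0>R(-\infty)$; otherwise $\operatorname{Ind}_\infty(R)=0$. Then $\operatorname{Ind}_{\mathbb{P}\mathbb{R}}(R)=\operatorname{Ind}_{-\infty}^{+\infty}(R)+\operatorname{Ind}_\infty(R)$ (constants have index $0$). *)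

(* Defs.v *)
From HB Require Import structures.
From mathcomp Require Import all_boot all_order all_algebra.
From mathcomp Require Import polyrcf.
From mathcomp Require Import boolp reals.
Set Implicit Arguments. Unset Strict Implicit. Unset Printing Implicit Defensive.
Import Order.TTheory GRing.Theory Num.Theory.
Local Open Scope ring_scope.

Section CauchyIndex.
Variable R : realType.

(* A real rational function is represented by a pair (f1, f0) of real
   polynomials with f0 != 0, standing for f1 / f0. *)
Definition rat_eval (f1 f0 : {poly R}) (x : R) : R := f1.[x] / f0.[x].

(* order of w as a pole of f1/f0 (positive iff w is a pole); independent of
   the representation (f1, f0) *)
Definition pole_order (f1 f0 : {poly R}) (w : R) : int := (mup w f0)%:Z - (mup w f1)%:Z.

Definition odd_pole (f1 f0 : {poly R}) (w : R) : bool :=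
  [&& f1 != 0, 0 < pole_order f1 f0 w & odd `|pole_order f1 f0 w|%N].

Definition left_neg (r : R -> R) (w : R) := exists2 e : R, 0 < e & forall y, w - e < y < w -> r y < 0.
Definition left_pos (r : R -> R) (w : R) := exists2 e : R, 0 < e & forall y, w - e < y < w -> 0 < r y.
Definition right_neg (r : R -> R) (w : R) := exists2 e : R, 0 < e & forall y, w < y < w + e -> r y < 0.
Definition right_pos (r : R -> R) (w : R) := exists2 e : R, 0 < e & forall y, w < y < w + e -> 0 < r y.

Definition pinfty_neg (r : R -> R) := exists M : R, forall y, M < y -> r y < 0.
Definition pinfty_pos (r : R -> R) := exists M : R, forall y, M < y -> 0 < r y.
Definition minfty_neg (r : R -> R) := exists M : R, forall y, y < M -> r y < 0.
Definition minfty_pos (r : R -> R) := exists M : R, forall y, y < M -> 0 < r y.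

Definition Ind_at (f1 f0 : {poly R}) (w : R) : int :=
  let r := rat_eval f1 f0 in
  if odd_pole f1 f0 w then
    if `[< left_neg r w /\ right_pos r w >] then 1
    else if `[< left_pos r w /\ right_neg r w >] then -1
    else 0
  else 0.

(* Ind_{-oo}^{+oo}(R): sum over all real poles of odd order; every pole of
   f1/f0 is a real root of f0, and rootsR f0 lists them all (f0 != 0). *)
Definition Ind_real (f1 f0 : {poly R}) : int := \sum_(w <- rootsR f0) Ind_at f1 f0 w.

Definition inf_order (f1 f0 : {poly R}) : int := (size f1)%:Z - (size f0)%:Z.

Definition Ind_inf (f1 f0 : {poly R}) : int :=
  let r := rat_eval f1 f0 in
  if (0 < inf_order f1 f0) && odd `|inf_order f1 f0|%N then
    if `[< pinfty_neg r /\ minfty_pos r >] then 1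
    else if `[< pinfty_pos r /\ minfty_neg r >] then -1
    else 0
  else 0.

Definition Ind_PR (f1 f0 : {poly R}) : int := Ind_real f1 f0 + Ind_inf f1 f0.

End CauchyIndex.

(* Main.v *)
Require Import Defs.
From HB Require Import structures.
From mathcomp Require Import all_boot all_order all_algebra.
From mathcomp Require Import polyrcf polyorder qe_rcf_th.
From mathcomp Require Import boolp reals.
From mathcomp Require Import ring.
Import Order.TTheory GRing.Theory Num.Theory.
Local Open Scope ring_scope.

Section Aux.
Variable R : realType.
Implicit Types (p q : {poly R}) (x w y : R).

Lemma mupE x p : p != 0 -> mup x p = \mu_x p.
Proof.
by move=> p0; apply/eqP; rewrite eqn_leq mup_leq // root_muN // mup_geq // root_mu.
Qed.

Lemma sg_rat (f1 f0 : {poly R}) y : Num.sg (rat_eval f1 f0 y) = Num.sg ((f1 * f0).[y]).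
Proof. by rewrite /rat_eval hornerM !sgrM sgrV. Qed.

Lemma right_sg p w : p != 0 -> exists2 e : R, 0 < e &
  forall y, w < y < w + e -> Num.sg p.[y] = sgp_right p w.
Proof.
move=> p0; have lt: w < w + 1 by rewrite ltrDl.
have hg := next_root_gt lt p0.
exists (next_root p w (w + 1) - w); first by rewrite subr_gt0.
move=> y /andP[h1 h2]; apply: (sgr_neighpr (b := w + 1)).
by rewrite /neighpr in_itv /= h1 /=; move: h2; rewrite addrC subrK.
Qed.

Lemma left_sg p w : p != 0 -> exists2 e : R, 0 < e &
  forall y, w - e < y < w ->
    Num.sg p.[y] = (-1) ^+ (odd (\mu_w p)) * sgp_right p w.
Proof.
move=> p0; have lt: w - 1 < w by rewrite ltrBlDr ltrDl.
have hg := prev_root_lt lt p0.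
exists (w - prev_root p (w - 1) w); first by rewrite subr_gt0.
move=> y /andP[h1 h2]; apply: (sgr_neighpl (a := w - 1)).
by rewrite /neighpl in_itv /= h2 andbT; move: h1; rewrite opprB addrC subrK.
Qed.

Lemma right_excl (r : R -> R) w : right_pos r w -> right_neg r w -> False.
Proof.
move=> [e1 e1p h1] [e2 e2p h2].
pose m := Order.min e1 e2.
have m0 : 0 < m by rewrite lt_min e1p e2p.
have me1 : m <= e1 by rewrite ge_min lexx.
have me2 : m <= e2 by rewrite ge_min lexx orbT.
have hy : w < w + m / 2 < w + e1.
  apply/andP; split; first by rewrite ltrDl divr_gt0.
  rewrite ltrD2l; apply: lt_le_trans me1; rewrite ltr_pdivrMr // ltr_pMr //.
  by rewrite ltrDl.
have hy' : w < w + m / 2 < w + e2.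
  apply/andP; split; first by rewrite ltrDl divr_gt0.
  rewrite ltrD2l; apply: lt_le_trans me2; rewrite ltr_pdivrMr // ltr_pMr //.
  by rewrite ltrDl.
by have := h1 _ hy; have := h2 _ hy'; move=> /lt_trans H /H; rewrite ltxx.
Qed.

Lemma sgr1_pos (u : R) : Num.sg u = 1 -> 0 < u.
Proof. by move=> h; rewrite -sgr_gt0 h ltr01. Qed.
Lemma sgrN1_neg (u : R) : Num.sg u = -1 -> u < 0.
Proof. by move=> h; rewrite -sgr_lt0 h ltrN10. Qed.

Lemma Ind_at_jump (f1 f0 : {poly R}) w : f0 != 0 -> Ind_at f1 f0 w = jump f1 f0 w.
Proof.
move=> f00; rewrite /Ind_at /odd_pole /pole_order /jump.
have [->|f10] := eqVneq f1 0; first by [].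
rewrite !mupE // !andTb.
set m0 := \mu_w f0; set m1 := \mu_w f1.
have [lt10|le01] := ltnP m1 m0; last first.
  have -> : (m0 - m1 = 0)%N by apply/eqP; rewrite subn_eq0.
  rewrite mulr0n.
  have -> : (0 < m0%:Z - m1%:Z) = false.
    by apply/negbTE; rewrite -leNgt subr_le0 lez_nat.
  by [].
rewrite (subzn (ltnW lt10)) ltz_nat subn_gt0 lt10 andTb absz_nat.
case: (boolP (odd (m0 - m1))) => hodd; last by rewrite mulr0n.
rewrite mulr1n.
set P := f1 * f0.
have P0 : P != 0 by rewrite mulf_neq0.
have oddP : odd (\mu_w P).
  by rewrite /P mu_mul // oddD -/m0 -/m1 addbC -oddB ?(ltnW lt10).
have [e1 e1p hr] := @right_sg P w P0.
have [e2 e2p hl] := @left_sg P w P0.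
rewrite oddP expr1 in hl.
have sP0 : sgp_right P w != 0 by rewrite sgp_right_eq0.
have hy : w < w + e1 / 2 < w + e1.
  by rewrite ltrDl divr_gt0 // ltrD2l ltr_pdivrMr // ltr_pMr // ltr1n.
have [hs|hs] : sgp_right P w = 1 \/ sgp_right P w = -1.
  move: sP0; rewrite -(hr _ hy); case: sgrP => _; rewrite ?eqxx // => _.
    by left.
  by right.
- rewrite hs ltr10 expr0 asboolT //; split.
    exists e2 => // y' hy'; apply: sgrN1_neg; rewrite sg_rat -/P hl // hs mulr1.
    by [].
  by exists e1 => // y' hy'; apply: sgr1_pos; rewrite sg_rat -/P hr // hs.
- rewrite hs ltrN10 expr1 asboolF; last first.
    move=> [_ hrp].
    apply: (right_excl _ _ hrp); exists e1 => // y' hy'.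
    by apply: sgrN1_neg; rewrite sg_rat -/P hr // hs.
  rewrite asboolT //; split.
    exists e2 => // y' hy'; apply: sgr1_pos; rewrite sg_rat -/P hl // hs mulrNN mulr1.
    by [].
  by exists e1 => // y' hy'; apply: sgrN1_neg; rewrite sg_rat -/P hr // hs.
Qed.

Lemma sgr_r_pinf (f1 f0 : {poly R}) y : f1 * f0 != 0 ->
  cauchy_bound (f1 * f0) <= y ->
  Num.sg (rat_eval f1 f0 y) = Num.sg (lead_coef f1 * lead_coef f0).
Proof.
move=> P0 hy; rewrite sg_rat (@sgp_pinftyP _ (cauchy_bound (f1 * f0))).
- by rewrite /sgp_pinfty lead_coefM.
- exact: ge_cauchy_bound.
- by rewrite in_itv /= hy.
Qed.

Lemma sgr_r_minf (f1 f0 : {poly R}) y : f1 * f0 != 0 ->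
  y <= - cauchy_bound (f1 * f0) ->
  Num.sg (rat_eval f1 f0 y) = sgp_minfty (f1 * f0).
Proof.
move=> P0 hy; rewrite sg_rat (@sgp_minftyP _ (- cauchy_bound (f1 * f0))) //.
all: first [exact: le_cauchy_bound | by rewrite in_itv /= hy].
Qed.

Definition Iinf (f1 f0 : {poly R}) : int :=
  if (size f0 < size f1)%N && odd (size f1 - size f0)
  then - sgz (lead_coef f1 * lead_coef f0) else 0.

Lemma Ind_inf_eq (f1 f0 : {poly R}) : f0 != 0 -> Ind_inf f1 f0 = Iinf f1 f0.
Proof.
move=> f00; rewrite /Ind_inf /inf_order /Iinf.
set n1 := size f1; set n0 := size f0.
have [h|h] := ltnP n0 n1; last first.
  have -> : (0 < n1%:Z - n0%:Z) = false.
    by apply/negbTE; rewrite -leNgt subr_le0 lez_nat.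
  by rewrite andFb.
rewrite (subzn (ltnW h)) ltz_nat subn_gt0 h !andTb absz_nat.
case: (boolP (odd (n1 - n0))) => hodd; last by [].
have f10 : f1 != 0 by rewrite -size_poly_gt0 (leq_ltn_trans _ h).
have P0 : f1 * f0 != 0 by rewrite mulf_neq0.
set B := cauchy_bound (f1 * f0).
set L := lead_coef f1 * lead_coef f0.
have L0 : L != 0 by rewrite mulf_neq0 ?lead_coef_eq0.
have hp : forall y, B <= y -> Num.sg (rat_eval f1 f0 y) = Num.sg L.
  by move=> y hy; apply: sgr_r_pinf.
have hm : forall y, y <= - B -> Num.sg (rat_eval f1 f0 y) = - Num.sg L.
  move=> y hy; rewrite sgr_r_minf // /sgp_minfty size_mul // lead_coefM -/L.
  have n0p : (0 < n0)%N by rewrite size_poly_gt0.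
  have e : ((n1 + n0).-1.-1 = (n1 + n0) - 2)%N by rewrite subn2.
  have o : odd (n1 + n0).-1.-1.
    rewrite e oddB ?addbF; last by apply: leq_trans (leq_add h n0p); rewrite addn1.
    by move: hodd; rewrite oddD oddB // ltnW.
  by rewrite -signr_odd o expr1 mulN1r sgrN.
have hbig : forall M : R, exists y, M < y /\ B <= y.
  move=> M; exists (Num.max M B + 1); split.
    by rewrite (le_lt_trans (_ : M <= Num.max M B)) ?le_max ?lexx // ltrDl.
  by rewrite (le_trans (_ : B <= Num.max M B)) ?le_max ?lexx ?orbT // lerDl.
have := L0; rewrite neq_lt => /orP[Lneg|Lpos].
  rewrite (ltr0_sgz Lneg) opprK asboolT //; split.
    by exists B => y hy; apply: sgrN1_neg; rewrite hp ?ltW // ltr0_sg.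
  by exists (-B) => y hy; apply: sgr1_pos; rewrite hm ?ltW // ltr0_sg // opprK.
rewrite (gtr0_sgz Lpos) asboolF; last first.
  move=> [[M hM] _]; have [y [h1 h2]] := hbig M; move: (hM _ h1).
  by rewrite -sgr_lt0 hp // gtr0_sg // ltr10.
rewrite asboolT //; split.
  by exists B => y hy; apply: sgr1_pos; rewrite hp ?ltW // gtr0_sg.
by exists (-B) => y hy; apply: sgrN1_neg; rewrite hm ?ltW // gtr0_sg.
Qed.

Definition IPR (f1 f0 : {poly R}) : int := cindexR f1 f0 + Iinf f1 f0.

Lemma Ind_PR_IPR (f1 f0 : {poly R}) : f0 != 0 -> Ind_PR f1 f0 = IPR f1 f0.
Proof.
move=> f00; rewrite /Ind_PR /IPR Ind_inf_eq // /Ind_real /cindexR.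
by congr (_ + _); apply: eq_bigr => w _; apply: Ind_at_jump.
Qed.

Lemma sgz_sq (k : R) : k != 0 -> sgz k * sgz k = 1.
Proof. by move=> k0; rewrite mulz_sg k0. Qed.

Lemma rootsRZ (k : R) p : k != 0 -> rootsR (k *: p) = rootsR p.
Proof.
move=> k0; have [->|p0] := eqVneq p 0; first by rewrite scaler0.
have kp0 : k *: p != 0 by rewrite scale_poly_eq0 negb_or k0.
rewrite /rootsR rootsZ //; apply: rootsRP => x hx.
  by have := le_cauchy_bound kp0 hx; rewrite rootZ.
by have := ge_cauchy_bound kp0 hx; rewrite rootZ.
Qed.

Lemma cindexR_mulCp (c : R) p q : cindexR (c *: p) q = sgz c * cindexR p q.
Proof.
by rewrite /cindexR big_distrr; apply: eq_bigr => x _; rewrite jump_mulCp.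
Qed.

Lemma IPR_scale2 (k : R) (f1 f0 : {poly R}) : k != 0 ->
  IPR (k *: f1) (k *: f0) = IPR f1 f0.
Proof.
move=> k0; rewrite /IPR; congr (_ + _).
  rewrite /cindexR rootsRZ //; apply: eq_bigr => x _.
  by rewrite jump_mulCp jump_pmulC mulrA sgz_sq // mul1r.
rewrite /Iinf !size_scale // !lead_coefZ mulrACA sgzM (sgzM k k) sgz_sq // mul1r.
reflexivity.
Qed.

Lemma IPR_pos (k : R) (f1 f0 : {poly R}) : 0 < k ->
  IPR (k *: f1) f0 = IPR f1 f0.
Proof.
move=> kp; have k0 : k != 0 by rewrite gt_eqF.
rewrite /IPR cindexR_mulCp gtr0_sgz // mul1r; congr (_ + _).
by rewrite /Iinf !size_scale // !lead_coefZ -mulrA sgzM gtr0_sgz // mul1r.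
Qed.

Lemma jump_transl (t : R) (f1 f0 : {poly R}) x : f0 != 0 ->
  jump (f1 + t *: f0) f0 x = jump f1 f0 x.
Proof.
move=> f00; have [->|t0] := eqVneq t 0; first by rewrite scale0r addr0.
have [->|f10] := eqVneq f1 0.
  rewrite jump0p add0r /jump mu_mulC // subnn.
  have -> : odd 0 = false by [].
  by rewrite andbF mulr0n.
have [lt|le] := ltnP (\mu_x f1) (\mu_x f0).
  have mu_eq : \mu_x (f1 + t *: f0) = \mu_x f1 by rewrite mu_addr // mu_mulC.
  have nz : f1 + t *: f0 != 0.
    apply: contraTneq lt => /eqP; rewrite addr_eq0 => /eqP ->.
    by rewrite -leqNgt mu_opp mu_mulC.
  rewrite /jump nz f10 mu_eq; congr (_ ^+ _ *+ _); congr (_ < 0).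
  rewrite mulrDl addrC sgp_right_addp0 ?mulf_neq0 //.
  rewrite -scalerAl mu_mulC // !mu_mul ?mulf_neq0 //.
  by rewrite ltn_add2r.
have -> : jump f1 f0 x = 0.
  rewrite /jump; have -> : (\mu_x f0 - \mu_x f1 = 0)%N by apply/eqP; rewrite subn_eq0.
  have -> : odd 0 = false by [].
  by rewrite andbF mulr0n.
have [->|nz] := eqVneq (f1 + t *: f0) 0; first by rewrite jump0p.
have hle : (\mu_x f0 <= \mu_x (f1 + t *: f0))%N.
  rewrite -root_le_mu //; apply: dvdp_add.
    by rewrite root_le_mu.
  by rewrite dvdpZr // root_le_mu.
rewrite /jump; have -> : (\mu_x f0 - \mu_x (f1 + t *: f0) = 0)%N.
  by apply/eqP; rewrite subn_eq0.
have -> : odd 0 = false by [].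
by rewrite andbF mulr0n.
Qed.

Lemma IPR_transl (t : R) (f1 f0 : {poly R}) : f0 != 0 ->
  IPR (f1 + t *: f0) f0 = IPR f1 f0.
Proof.
move=> f00; rewrite /IPR; congr (_ + _).
  by rewrite /cindexR; apply: eq_bigr => x _; rewrite jump_transl.
have [->|t0] := eqVneq t 0; first by rewrite scale0r addr0.
rewrite /Iinf; have [h|h] := ltnP (size f0) (size f1).
  have hs : (size (t *: f0) < size f1)%N by rewrite size_scale.
  by rewrite size_polyDl // lead_coefDl // h.
have -> : (size f0 < size (f1 + t *: f0)%R)%N = false.
  apply/negbTE; rewrite -leqNgt; apply: leq_trans (@size_polyD _ f1 (t *: f0)) _.
  by rewrite geq_max h size_scale // leqnn.
by [].
Qed.

Lemma cindexR_inv (f1 f0 : {poly R}) :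
  cindexR f1 f0 + cindexR f0 f1 = crossR (f0 * f1).
Proof.
have h : cindexR (next_mod f0 f1) f1 = - cindexR f0 f1.
  rewrite /next_mod cindexR_mulCp sgzN sgzX mulNr; congr (- _).
  rewrite /cindexR big_distrr; apply: eq_bigr => x _.
  by rewrite [RHS]jump_mod.
by rewrite (cindexR_rec f0 f1) h -addrA addNr addr0.
Qed.

Lemma crossR_eq (f0 f1 : {poly R}) : f0 != 0 -> f1 != 0 ->
  crossR (f0 * f1) =
  if odd (size f0 + size f1) then sgz (lead_coef f0 * lead_coef f1) else 0.
Proof.
move=> f00 f10; rewrite /crossR /sgp_minfty /sgp_pinfty size_mul // lead_coefM.
set L := lead_coef f0 * lead_coef f1.
have L0 : L != 0 by rewrite mulf_neq0 ?lead_coef_eq0.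
have n0p : (0 < size f0)%N by rewrite size_poly_gt0.
have n1p : (0 < size f1)%N by rewrite size_poly_gt0.
have e : ((size f0 + size f1).-1.-1 = (size f0 + size f1) - 2)%N by rewrite subn2.
have o : odd (size f0 + size f1).-1.-1 = odd (size f0 + size f1).
  rewrite e oddB ?addbF //; by apply: leq_trans (leq_add n0p n1p) _.
rewrite -signr_odd o; case: (odd _).
  rewrite expr1 mulN1r sgrN /variation.
  have := L0; rewrite neq_lt => /orP[Lneg|Lpos].
    by rewrite ltr0_sg // sgzN sgz1 (ltr0_sgz Lneg) mulrN1 opprK ltrN10.
  by rewrite gtr0_sg // sgz1 (gtr0_sgz Lpos) mulr1 ltrN10.
rewrite expr0 mul1r /variation.
have := L0; rewrite neq_lt => /orP[Lneg|Lpos].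
  by rewrite ltr0_sg // mulN1r opprK ltr10 mulr0.
by rewrite gtr0_sg // mulr1 ltr10 mulr0.
Qed.

Lemma IPR_inv (f1 f0 : {poly R}) : f1 != 0 -> f0 != 0 ->
  IPR (- f0) f1 = IPR f1 f0.
Proof.
move=> f10 f00; rewrite /IPR -scaleN1r cindexR_mulCp sgzN sgz1 mulN1r scaleN1r.
have hi := cindexR_inv f1 f0.
have -> : cindexR f0 f1 = crossR (f0 * f1) - cindexR f1 f0.
  by rewrite -hi addrAC subrr add0r.
rewrite (crossR_eq _ _ f00 f10) /Iinf size_polyN lead_coefN mulNr sgzN.
rewrite [lead_coef f1 * lead_coef f0]mulrC.
set n0 := size f0; set n1 := size f1.
set C := cindexR f1 f0; set L := sgz (lead_coef f0 * lead_coef f1).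
case: (ltngtP n0 n1) => h.
- have -> : odd (n0 + n1) = odd (n1 - n0) by rewrite (oddB (ltnW h)) oddD addbC.
  have h' : (n1 < n0)%N = false by rewrite ltnNge ltnW.
  rewrite ?h ?h' ?andFb ?andTb; case: (odd _); ring.
- have -> : odd (n0 + n1) = odd (n0 - n1) by rewrite (oddB (ltnW h)) oddD.
  have h' : (n0 < n1)%N = false by rewrite ltnNge ltnW.
  rewrite ?h ?h' ?andFb ?andTb; case: (odd _); ring.
- rewrite h addnn odd_double ?ltnn ?andFb; ring.
Qed.
End Aux.

Theorem theorem59 (R : realType) (a b c d : R) (f1 f0 : {poly R}) :
  a * d - b * c = 1 ->
  f0 != 0 ->
  c *: f1 + d *: f0 != 0 ->
  Ind_PR (a *: f1 + b *: f0) (c *: f1 + d *: f0) = Ind_PR f1 f0.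
Proof.
move=> hdet f00 g0; rewrite !Ind_PR_IPR //.
have [c0|cn0] := eqVneq c 0.
  move: hdet g0; rewrite c0 mulr0 subr0 scale0r add0r => hd g0.
  have d0 : d != 0 by move: g0; rewrite scale_poly_eq0 negb_or => /andP[].
  have a0 : a != 0 by apply: contra_eq_neq hd => ->; rewrite mul0r eq_sym oner_neq0.
  have e1 : a *: f1 + b *: f0 = d *: ((a ^+ 2) *: f1 + (a * b) *: f0).
    rewrite scalerDr !scalerA; congr (_ *: _ + _ *: _).
      by rewrite expr2 mulrA (mulrC d a) hd mul1r.
    by rewrite mulrA (mulrC d a) hd mul1r.
  rewrite e1 IPR_scale2 // IPR_transl // IPR_pos //.
  by rewrite lt0r sqr_ge0 andbT sqrf_eq0.
have k0 : c^-1 != 0 by rewrite invr_eq0.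
have kf0 : c^-1 *: f0 != 0 by rewrite scale_poly_eq0 negb_or k0.
have hb : b = (a * d - 1) / c by rewrite -hdet opprB addrC subrK mulfK.
have e2 : a *: f1 + b *: f0 = - (c^-1 *: f0) + (a / c) *: (c *: f1 + d *: f0).
  rewrite scalerDr !scalerA (mulfVK cn0) addrCA; congr (_ + _).
  rewrite -scaleNr -scalerDl; congr (_ *: _).
  by rewrite hb; field.
have e3 : c *: f1 + d *: f0 = c^-1 *: ((c ^+ 2) *: f1 + (c * d) *: f0).
  rewrite scalerDr !scalerA; congr (_ *: _ + _ *: _).
    by rewrite expr2 mulKf.
  by rewrite mulKf.
rewrite e2 IPR_transl // IPR_inv // e3 IPR_scale2 // IPR_transl // IPR_pos //.
by rewrite lt0r sqr_ge0 andbT sqrf_eq0.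
Qed.
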